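(* Let $q=p^m$ with $p$ an odd prime, $q\equiv 1\pmod 3$, $q\geq 13$. The connected components of $C_P(q)$ are exactly: (1) the $q(q-1)$ isolated vertices, which are the maps $\pi(x)=ax+b$ with $a\neq 0$ (equivalently $\pi(\infty)=\infty$); and (2) the $q-1$ induced subgraphs $[P_r]$, $r\in GF(q)\setminus\{0\}$, each of which is connected.
   Context: $PGL(2,q)$ is the group of maps $x\mapsto\frac{ax+b}{cx+d}$ ($a,b,c,d\in GF(q)$, $ad\neq bc$) acting on $GF(q)\cup\{\infty\}$ with the usual conventions ($-d/c\mapsto\infty$, $\infty\mapsto a/c$ if $c\neq0$, $\infty\mapsto\infty$ if $c=0$). For $K,i\in GF(q)$ and $r\in GF(q)\setminus\{0\}$, $f_{K,r,i}$ is the element of $PGL(2,q)$ with $f_{K,r,i}(x)=K+\frac{r}{x-i}$ for $x\notin\{i,\infty\}$, $f_{K,r,i}(\infty)=K$, $f_{K,r,i}(i)=\infty$. For $r\neq0$, $P_r=\{f_{a,r,i}: a,i\in GF(q)\}$. $hd(\pi,\sigma)$ is the number of points at which $\pi,\sigma$ differ. With distinguished element $F=\infty$, $\pi^{\triangle}$ is the permutation with $\pi^{\triangle}(\pi^{-1}(\infty))=\pi(\infty)$, $\pi^{\triangle}(\infty)=\infty$, $\pi^{\triangle}(x)=\pi(x)$ otherwise. The contraction graph $C_P(q)$ has vertex set $PGL(2,q)$, with distinct $\pi,\sigma$ adjacent iff $hd(\pi^{\triangle},\sigma^{\triangle})=q-4$. $[S]$ denotes the induced subgraph on $S$. *)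

(* Defs.v *)
From HB Require Import structures.
From mathcomp Require Import all_boot all_order all_algebra all_fingroup all_field.
Set Implicit Arguments. Unset Strict Implicit. Unset Printing Implicit Defensive.
Import GRing.Theory.
Local Open Scope ring_scope.

Section PGL.
Variable F : finFieldType.

(* The projective line GF(q) ∪ {∞}: [Some x] is x, [None] is ∞. *)
Definition pt := option F.
Definition pmap := {ffun pt -> pt}.

Definition mob (a b c d : F) : pmap :=
  [ffun x : pt => match x with
    | Some x0 => if c * x0 + d == 0 then None else Some ((a * x0 + b) / (c * x0 + d))
    | None => if c == 0 then None else Some (a / c)
    end].

(* PGL(2,q) as the set of maps it induces on GF(q) ∪ {∞}. *)
Definition PGL : {set pmap} :=
  [set f | [exists a : F, exists b : F, exists c : F, exists d : F,
              (a * d != b * c) && (f == mob a b c d)]].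

Definition fKri (K r i : F) : pmap :=
  [ffun x : pt => match x with
    | Some x0 => if x0 == i then None else Some (K + r / (x0 - i))
    | None => Some K
    end].

Definition Pr (r : F) : {set pmap} := [set fKri a r i | a in [set: F], i in [set: F]].

Definition Aff : {set pmap} := [set mob a b 0 1 | a in [set a : F | a != 0], b in [set: F]].

Definition hd (f g : pmap) : nat := #|[set x | f x != g x]|.

Definition tri (f : pmap) : pmap :=
  [ffun x : pt => match x with
    | None => None
    | Some _ => if f x == None then f None else f x
    end].

Definition CPadj : rel pmap :=
  fun f g => [&& f \in PGL, g \in PGL, f != g & hd (tri f) (tri g) == (#|F| - 4)%N].

Definition CPcomp (v : pmap) : {set pmap} := [set w | connect CPadj v w].

Definition CPcomponents : {set {set pmap}} := [set CPcomp v | v in PGL].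

End PGL.

(* Main.v *)
Require Import Defs.
From HB Require Import structures.
From mathcomp Require Import all_boot all_order all_algebra all_fingroup all_field all_solvable.
From mathcomp Require Import ring.
Set Implicit Arguments. Unset Strict Implicit. Unset Printing Implicit Defensive.
Import GRing.Theory FinRing.Theory.
Local Open Scope ring_scope.

Lemma cube_root (F : finFieldType) : (#|F| %% 3 = 1)%N -> exists w : F, w ^+ 2 + w + 1 = 0.
Proof.
move=> h3.
have d3 : (3 %| #|[set: {unit F}]|)%N.
  rewrite card_finField_unit; have h1 := finNzRing_gt1 F.
  apply/dvdnP; exists (#|F| %/ 3)%N; rewrite {1}(divn_eq #|F| 3) h3 addn1 //.
have [x _ ox] := Cauchy (isT : prime 3) d3.
exists (val (x : {unit F})).
have x3 : (x ^+ 3 = 1)%g by rewrite -ox expg_order.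
have x1 : (x != 1)%g by apply/eqP=> e; move: ox; rewrite e order1.
have v3 : (val x) ^+ 3 = 1 by rewrite -val_unitX x3.
have v1 : val x != 1 by apply: contra x1 => /eqP e; apply/eqP/val_inj.
have : (val x - 1) * ((val x) ^+ 2 + val x + 1) = 0.
  have -> : (val x - 1) * ((val x) ^+ 2 + val x + 1) = (val x) ^+ 3 - 1 by ring.
  by rewrite v3 subrr.
by move/eqP; rewrite mulf_eq0 subr_eq0 (negbTE v1) /= => /eqP.
Qed.

Lemma char_facts (p m : nat) (F : finFieldType) :
  prime p -> odd p -> #|F| = (p ^ m)%N -> (#|F| %% 3 = 1)%N ->
  (2%:R != 0 :> F) /\ (3%:R != 0 :> F).
Proof.
move=> pp op hq h3.
have pc := card_finPcharP hq pp.
split.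
  rewrite -(dvdn_pcharf pc); apply/negP => d.
  have := prime_gt1 pp; have : (p <= 2)%N by apply: dvdn_leq.
  by case: p pp op {hq pc d} => [|[|[|]]].
rewrite -(dvdn_pcharf pc); apply/negP => d.
have p3 : p = 3%N.
  by apply/eqP; rewrite -dvdn_prime2 //.
have g1 := finNzRing_gt1 F.
move: h3 g1; rewrite hq p3; case: m {hq} => [|m].
  by [].
by rewrite expnS modnMr.
Qed.

Definition liftf (F : finFieldType) (v : F -> F) : Defs.pmap F := [ffun x => omap v x].
Definition tv (F : finFieldType) (K r i : F) (x : F) := if x == i then K else K + r / (x - i).

Lemma tri_aff (F : finFieldType) (a b : F) : tri (mob a b 0 1) = liftf (fun x => a * x + b).
Proof.
apply/ffunP => -[x|]; rewrite !ffunE /=.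
  by rewrite mul0r add0r oner_eq0 /= divr1.
by [].
Qed.

Lemma tri_fK (F : finFieldType) (K r i : F) : tri (fKri K r i) = liftf (tv K r i).
Proof.
apply/ffunP => -[x|]; rewrite !ffunE //= /tv.
by case: (x == i).
Qed.

Lemma hd_lift (F : finFieldType) (v1 v2 : F -> F) :
  hd (liftf v1) (liftf v2) = #|[set x | v1 x != v2 x]|.
Proof.
rewrite /hd.
have -> : [set x | liftf v1 x != liftf v2 x] = Some @: [set x | v1 x != v2 x].
  apply/setP => -[x|]; rewrite !inE !ffunE /=.
    by rewrite (mem_imset _ _ (@Some_inj _)) inE.
  by apply/esym/imsetP => -[y].
by rewrite card_imset //; apply: Some_inj.
Qed.

Lemma hd_adj (F : finFieldType) (v1 v2 : F -> F) : (4 <= #|F|)%N ->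
  (hd (liftf v1) (liftf v2) == (#|F| - 4)%N) = (#|[set x | v1 x == v2 x]| == 4%N).
Proof.
move=> h4; rewrite hd_lift.
have -> : [set x | v1 x != v2 x] = ~: [set x | v1 x == v2 x].
  by apply/setP => x; rewrite !inE.
rewrite cardsCs setCK.
have := subset_leq_card (subsetT [set x | v1 x == v2 x]); rewrite cardsT.
move: #|_| => n hn.
apply/eqP/eqP => [h|->]; last by [].
have : (#|F| - (#|F| - n) = #|F| - (#|F| - 4))%N by rewrite h.
by rewrite !subKn.
Qed.

Lemma aff_PGL (F : finFieldType) (a b : F) : a != 0 -> mob a b 0 1 \in PGL F.
Proof.
move=> a0; rewrite inE; apply/existsP; exists a; apply/existsP; exists b.
apply/existsP; exists 0; apply/existsP; exists 1.
by rewrite mulr1 mulr0 a0 eqxx.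
Qed.

Lemma fK_mob (F : finFieldType) (K r i : F) : fKri K r i = mob K (r - K * i) 1 (- i).
Proof.
apply/ffunP => -[x|]; rewrite !ffunE /=; last by rewrite oner_eq0 divr1.
rewrite mul1r subr_eq0; case: eqP => // /eqP xi.
congr Some; have xi0 : x - i != 0 by rewrite subr_eq0.
by field.
Qed.

Lemma fK_PGL (F : finFieldType) (K r i : F) : r != 0 -> fKri K r i \in PGL F.
Proof.
move=> r0; rewrite fK_mob inE; apply/existsP; exists K; apply/existsP; exists (r - K * i).
apply/existsP; exists 1; apply/existsP; exists (- i).
rewrite eqxx andbT mulr1; apply: contra r0 => /eqP e.
by apply/eqP; rewrite -(subrK (K * i) r) -e; ring.
Qed.

Lemma PGL_cases (F : finFieldType) (f : Defs.pmap F) : f \in PGL F ->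
  (exists a b : F, a != 0 /\ f = mob a b 0 1) \/ (exists K r i : F, r != 0 /\ f = fKri K r i).
Proof.
rewrite inE => /existsP[a /existsP[b /existsP[c /existsP[d /andP[det /eqP ->]]]]].
have [c0|c0] := eqVneq c 0.
  subst c; rewrite mulr0 in det.
  have d0 : d != 0 by apply: contra det => /eqP ->; rewrite mulr0.
  have a0 : a != 0 by apply: contra det => /eqP ->; rewrite mul0r.
  left; exists (a / d), (b / d); split; first by rewrite mulf_neq0 ?invr_eq0.
  apply/ffunP => -[x|]; rewrite !ffunE /=; last by rewrite eqxx.
  rewrite !mul0r !add0r (negbTE d0) oner_eq0; congr Some; by rewrite divr1 mulrDl mulrAC.
right; exists (a / c), ((b * c - a * d) / c ^+ 2), (- (d / c)); split.
  rewrite mulf_neq0 ?invr_eq0 ?expf_neq0 //.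
  by rewrite subr_eq0 eq_sym.
apply/ffunP => -[x|]; rewrite !ffunE /=; last by rewrite (negbTE c0).
have e : (c * x + d == 0) = (x == - (d / c)).
  apply/eqP/eqP => h; last by rewrite h; field.
  have -> : x = (c * x + d) / c - d / c by field.
  by rewrite h mul0r sub0r.
rewrite e; case: eqP => // /eqP xd.
have xd0 : x + d / c != 0 by rewrite -(opprK (d / c)) subr_eq0.
have cd0 : c * x + d != 0 by rewrite e.
congr Some; field.
rewrite c0 /=; apply: contra cd0 => /eqP h; apply/eqP; rewrite -h; ring.
Qed.

Lemma deg2 (F : finFieldType) (A B C : F) : ~~ [&& A == 0, B == 0 & C == 0] ->
  exists z1 z2 : F, forall y, A * y ^+ 2 + B * y + C = 0 -> y = z1 \/ y = z2.
Proof.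
move=> nz.
have [A0|A0] := eqVneq A 0.
  subst A; have [B0|B0] := eqVneq B 0.
    subst B; move: nz; rewrite !eqxx /= => C0.
    exists 0, 0 => y; rewrite mul0r mul0r !add0r => C0'.
    by move: C0; rewrite C0' eqxx.
  exists (- C / B), (- C / B) => y; rewrite mul0r add0r => h; left.
  have e : y = (B * y + C - C) / B by field.
  by rewrite {1}e h; field.
case: (pickP (fun y => A * y ^+ 2 + B * y + C == 0)) => [z1 /eqP hz1|none].
  exists z1, (- B / A - z1) => y hy.
  have : A * ((y - z1) * (y - (- B / A - z1))) = 0.
    have -> : A * ((y - z1) * (y - (- B / A - z1))) =
      (A * y ^+ 2 + B * y + C) - (A * z1 ^+ 2 + B * z1 + C) by field.
    by rewrite hy hz1 subrr.
  move/eqP; rewrite !mulf_eq0 (negbTE A0) /= !subr_eq0 => /orP[/eqP|/eqP]; by [left|right].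
exists 0, 0 => y /eqP hy; by move: (none y); rewrite hy.
Qed.

Lemma small_card (F : finFieldType) (E : {set F}) (s : seq F) :
  (size s <= 3)%N -> {subset E <= s} -> #|E| != 4%N.
Proof.
move=> hs sub.
have h1 : (#|E| <= #|s|)%N by apply/subset_leq_card/subsetP.
have h2 := card_size s.
by apply/eqP => e; move: (leq_trans h1 (leq_trans h2 hs)); rewrite e.
Qed.

Lemma tv_i (F : finFieldType) (K r i : F) : tv K r i i = K.
Proof. by rewrite /tv eqxx. Qed.

Lemma tv_ne (F : finFieldType) (K r i x : F) : x != i -> tv K r i x = K + r / (x - i).
Proof. by rewrite /tv => /negbTE ->. Qed.

Lemma aff_aff (F : finFieldType) (a b a' b' : F) : mob a b 0 1 != mob a' b' 0 1 ->
  #|[set x | a * x + b == a' * x + b']| != 4%N.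
Proof.
move=> ne.
have [|z1 [z2 hz]] := @deg2 F 0 (a - a') (b - b').
  apply: contra ne; rewrite eqxx /= !subr_eq0 => /andP[/eqP -> /eqP ->]; by [].
apply: (@small_card F _ [:: z1; z2]) => // x; rewrite inE => /eqP h.
have : 0 * x ^+ 2 + (a - a') * x + (b - b') = 0.
  have -> : 0 * x ^+ 2 + (a - a') * x + (b - b') = (a * x + b) - (a' * x + b') by ring.
  by rewrite h subrr.
by move/hz => [->|->]; rewrite !inE eqxx ?orbT.
Qed.

Lemma aff_fK (F : finFieldType) (a b K r i : F) : a != 0 ->
  #|[set x | a * x + b == tv K r i x]| != 4%N.
Proof.
move=> a0.
have [|z1 [z2 hz]] := @deg2 F a (b - K - a * i) (- (b - K) * i - r).
  by rewrite (negbTE a0).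
apply: (@small_card F _ [:: i; z1; z2]) => // x; rewrite inE.
have [->|xi] := eqVneq x i; first by rewrite !inE eqxx.
rewrite tv_ne // => /eqP h.
have xi0 : x - i != 0 by rewrite subr_eq0.
have : a * x ^+ 2 + (b - K - a * i) * x + (- (b - K) * i - r) = 0.
  have -> : a * x ^+ 2 + (b - K - a * i) * x + (- (b - K) * i - r) =
     (a * x + b - (K + r / (x - i))) * (x - i) by field.
  by rewrite h subrr mul0r.
by move/hz => [->|->]; rewrite !inE eqxx ?orbT.
Qed.

Lemma fK_fK_bad (F : finFieldType) (K r i K' r' i' : F) : r != 0 ->
  fKri K r i != fKri K' r' i' ->
  ~~ [&& i != i', K - K' == r / (i - i') & r == r'] ->
  #|[set x | tv K r i x == tv K' r' i' x]| != 4%N.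
Proof.
move=> r0 ne bad.
have [ii|ii] := eqVneq i i'.
  subst i'.
  have [|z1 [z2 hz]] := @deg2 F 0 (K - K') (- (K - K') * i + r - r').
    apply: contra ne; rewrite eqxx /= subr_eq0 => /andP[/eqP KK].
    subst K'; rewrite subrr oppr0 mul0r add0r subr_eq0 => /eqP ->; by [].
  apply: (@small_card F _ [:: i; z1; z2]) => // x; rewrite inE.
  have [->|xi] := eqVneq x i; first by rewrite !inE eqxx.
  rewrite !tv_ne // => /eqP h.
  have xi0 : x - i != 0 by rewrite subr_eq0.
  have : 0 * x ^+ 2 + (K - K') * x + (- (K - K') * i + r - r') = 0.
    have -> : 0 * x ^+ 2 + (K - K') * x + (- (K - K') * i + r - r') =
       (K + r / (x - i) - (K' + r' / (x - i))) * (x - i) by field.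
    by rewrite h subrr mul0r.
  by move/hz => [->|->]; rewrite !inE eqxx ?orbT.
have d0 : i - i' != 0 by rewrite subr_eq0.
have d0' : i' - i != 0 by rewrite subr_eq0 eq_sym.
have [|z1 [z2 hz]] := @deg2 F (K - K') (- (K - K') * (i + i') + r - r')
                              ((K - K') * i * i' - r * i' + r' * i).
  apply/negP => /and3P[/eqP A /eqP B /eqP C].
  have KK : K' = K by apply/eqP; rewrite eq_sym -subr_eq0 A.
  subst K'; move: B; rewrite subrr oppr0 mul0r add0r => /eqP; rewrite subr_eq0 => /eqP B.
  subst r'.
  have : r * (i - i') = 0 by rewrite -C; ring.
  by move/eqP; rewrite mulf_eq0 (negbTE r0) (negbTE d0).
have quad : forall x, x != i -> x != i' -> x \in [set x | tv K r i x == tv K' r' i' x] ->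
    x \in [:: z1; z2].
  move=> x xi xi'; rewrite inE !tv_ne // => /eqP h.
  have xi0 : x - i != 0 by rewrite subr_eq0.
  have xi0' : x - i' != 0 by rewrite subr_eq0.
  have : (K - K') * x ^+ 2 + (- (K - K') * (i + i') + r - r') * x +
      ((K - K') * i * i' - r * i' + r' * i) = 0.
    have -> : (K - K') * x ^+ 2 + (- (K - K') * (i + i') + r - r') * x +
      ((K - K') * i * i' - r * i' + r' * i) =
       (K + r / (x - i) - (K' + r' / (x - i'))) * ((x - i) * (x - i')) by field; rewrite xi0 xi0'.
    by rewrite h subrr mul0r.
  by move/hz => [->|->]; rewrite !inE eqxx ?orbT.
have [sp1|sp1] := boolP (tv K r i i == tv K' r' i' i).
  have [sp2|sp2] := boolP (tv K r i i' == tv K' r' i' i').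
    exfalso; move: bad; rewrite ii /=.
    rewrite tv_i tv_ne // in sp1; rewrite tv_i tv_ne 1?eq_sym // in sp2.
    move/eqP: sp1 => sp1; move/eqP: sp2 => sp2.
    have e1 : K - K' = r / (i - i').
      by rewrite sp2; field; rewrite d0 d0'.
    have e2 : K - K' = r' / (i - i') by rewrite sp1; field; rewrite d0.
    rewrite e1 eqxx /=; apply/negP/negPn/eqP.
    have := e2; rewrite e1 => e3.
    by rewrite -(divfK d0 r) e3 divfK.
  apply: (@small_card F _ [:: i; z1; z2]) => // x hx.
  have [->|xi] := eqVneq x i; first by rewrite !inE eqxx.
  have [exi'|xi'] := eqVneq x i'.
    by subst x; move: hx; rewrite inE (negbTE sp2).
  by have := quad x xi xi' hx; rewrite !inE => ->; rewrite orbT.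
apply: (@small_card F _ [:: i'; z1; z2]) => // x hx.
have [->|xi'] := eqVneq x i'; first by rewrite !inE eqxx.
have [exi|xi] := eqVneq x i.
  by subst x; move: hx; rewrite inE (negbTE sp1).
by have := quad x xi xi' hx; rewrite !inE => ->; rewrite orbT.
Qed.

Lemma fK_fK_good (F : finFieldType) (w K r i K' i' : F) :
  w ^+ 2 + w + 1 = 0 -> 3%:R != 0 :> F -> r != 0 -> i != i' ->
  K - K' = r / (i - i') ->
  #|[set x | tv K r i x == tv K' r i' x]| = 4%N.
Proof.
move=> hw h3 r0 ii e.
have [d dE] : exists d, d = i - i' by eexists.
have d0 : d != 0 by rewrite dE subr_eq0.
have w0 : w != 0.
  apply/eqP => h; have : (1 : F) = 0 by rewrite -hw h; ring.
  by move/eqP; rewrite oner_eq0.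
have w1 : w + 1 != 0.
  apply/eqP => h; have hw1 : w = -1 by rewrite -(addrK 1 w) h sub0r.
  have : (1 : F) = 0 by rewrite -hw hw1; ring.
  by move/eqP; rewrite oner_eq0.
have w2 : w - 1 != 0.
  apply/eqP => h; have hw1 : w = 1 by rewrite -(subrK 1 w) h add0r.
  move/eqP: h3; apply; rewrite -hw hw1; ring.
have ww : w ^+ 2 = - w - 1 by rewrite -(subr0 (w ^+ 2)) -hw; ring.
have [s sE] : exists s, s = [:: i; i'; i + d * w; i + d * w ^+ 2] by eexists.
have us : uniq s.
  rewrite sE /= !inE !negb_or; apply/and4P; split.
  - apply/and3P; split.
    + exact: ii.
    + by rewrite eq_sym -subr_eq0 addrC addKr mulf_neq0.
    + by rewrite eq_sym -subr_eq0 addrC addKr mulf_neq0 // expf_neq0.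
  - apply/andP; split.
    + rewrite -subr_eq0; have -> : i' - (i + d * w) = - (d * (w + 1)) by rewrite dE; ring.
      by rewrite oppr_eq0 mulf_neq0.
    + rewrite -subr_eq0; have -> : i' - (i + d * w ^+ 2) = - (d * (w ^+ 2 + 1)) by rewrite dE; ring.
      rewrite oppr_eq0 mulf_neq0 // ww; have -> : - w - 1 + 1 = - w by ring.
      by rewrite oppr_eq0.
  - rewrite -subr_eq0; have -> : i + d * w - (i + d * w ^+ 2) = d * w * (1 - w) by ring.
    by rewrite !mulf_neq0 // subr_eq0 eq_sym -subr_eq0.
  - by [].
have E : [set x | tv K r i x == tv K' r i' x] =i s.
  move=> x; rewrite inE sE.
  have [->|xi] := eqVneq x i.
    rewrite tv_i tv_ne // !inE eqxx /=; apply/eqP.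
    by rewrite -(subrK K' K) e addrC.
  have [->|xi'] := eqVneq x i'.
    rewrite tv_i tv_ne 1?eq_sym // !inE eqxx orbT; apply/eqP.
    have -> : K = K' + r / (i - i') by rewrite -e; ring.
    by field; rewrite !subr_eq0 ii eq_sym ii.
  rewrite !tv_ne // !inE (negbTE xi) (negbTE xi') /=.
  have xi0 : x - i != 0 by rewrite subr_eq0.
  have xi0' : x - i' != 0 by rewrite subr_eq0.
  have -> : K = K' + r / d by rewrite dE -e; ring.
  have key : (K' + r / d + r / (x - i)) - (K' + r / (x - i')) =
      r / (d * (x - i) * (x - i')) * ((x - i - d * w) * (x - i - d * w ^+ 2)).
    have -> : (x - i - d * w) * (x - i - d * w ^+ 2) =
       (x - i) ^+ 2 + d * (x - i) + d ^+ 2 - d * (w ^+ 2 + w + 1) * (x - i)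
       + d ^+ 2 * (w - 1) * (w ^+ 2 + w + 1) by ring.
    rewrite hw !mulr0 mul0r subr0 addr0.
    have -> : x - i' = x - i + d by rewrite dE; ring.
    field; rewrite d0 xi0 /=.
    have -> : x - i + d = x - i' by rewrite dE; ring.
    by rewrite xi0'.
  rewrite -subr_eq0 key mulf_eq0 mulf_eq0 (negbTE r0) invr_eq0.
  rewrite (negbTE (mulf_neq0 (mulf_neq0 d0 xi0) xi0')) /= mulf_eq0 !subr_eq0.
  by rewrite !subr_eq ![_ + i]addrC.
rewrite (eq_card E); move/card_uniqP: us => ->; by rewrite sE.
Qed.

Lemma CPadj_sym (F : finFieldType) (f g : Defs.pmap F) : CPadj f g = CPadj g f.
Proof.
rewrite /CPadj /hd eq_sym.
have -> : [set x | tri f x != tri g x] = [set x | tri g x != tri f x].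
  by apply/setP => x; rewrite !inE eq_sym.
by case: (f \in PGL F); case: (g \in PGL F).
Qed.

Lemma adj_lift (F : finFieldType) (f g : Defs.pmap F) (v1 v2 : F -> F) : (4 <= #|F|)%N ->
  tri f = liftf v1 -> tri g = liftf v2 ->
  CPadj f g = [&& f \in PGL F, g \in PGL F, f != g & #|[set x | v1 x == v2 x]| == 4%N].
Proof. by move=> h4 e1 e2; rewrite /CPadj e1 e2 hd_adj. Qed.

Lemma aff_isolated (F : finFieldType) (a b : F) (g : Defs.pmap F) : (4 <= #|F|)%N ->
  a != 0 -> ~~ CPadj (mob a b 0 1) g.
Proof.
move=> h4 a0; apply/negP => adj.
have gP : g \in PGL F by case/and4P: adj.
case: (PGL_cases gP) => [[a' [b' [a0' eg]]]|[K [r [i [r0 eg]]]]]; subst g.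
  move: adj; rewrite (adj_lift h4 (tri_aff _ _) (tri_aff _ _)) => /and4P[_ _ ne /eqP c].
  by move: (aff_aff ne); rewrite c.
move: adj; rewrite (adj_lift h4 (tri_aff _ _) (tri_fK _ _ _)) => /and4P[_ _ ne /eqP c].
by move: (aff_fK b K r i a0); rewrite c.
Qed.

Lemma Pr_closed (F : finFieldType) (K r i : F) (g : Defs.pmap F) : (4 <= #|F|)%N ->
  r != 0 -> CPadj (fKri K r i) g -> g \in Pr r.
Proof.
move=> h4 r0 adj.
have gP : g \in PGL F by case/and4P: adj.
case: (PGL_cases gP) => [[a' [b' [a0' e]]]|[K' [r' [i' [r0' e]]]]].
  by subst g; move: adj; rewrite CPadj_sym (negbTE (@aff_isolated F a' b' (fKri K r i) h4 a0')).
subst g; move: adj; rewrite (adj_lift h4 (tri_fK _ _ _) (tri_fK _ _ _)) => /and4P[_ _ ne /eqP c].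
have [good|bad] := boolP [&& i != i', K - K' == r / (i - i') & r == r'].
  case/and3P: good => _ _ /eqP <-.
  by apply/imset2P; exists K' i'; rewrite ?inE.
by move: (fK_fK_bad r0 ne bad); rewrite c.
Qed.

Lemma Pr_adj (F : finFieldType) (w K r i K' i' : F) : (4 <= #|F|)%N ->
  w ^+ 2 + w + 1 = 0 -> 3%:R != 0 :> F -> r != 0 -> i != i' ->
  K - K' = r / (i - i') -> CPadj (fKri K r i) (fKri K' r i').
Proof.
move=> h4 hw h3 r0 ii e.
rewrite (adj_lift h4 (tri_fK _ _ _) (tri_fK _ _ _)) !fK_PGL //=.
rewrite (fK_fK_good hw h3 r0 ii e) eqxx andbT.
apply/eqP => /ffunP /(_ (Some i)); rewrite !ffunE /= eqxx.
by case: eqP => // ei; move: ii; rewrite ei eqxx.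
Qed.

Lemma closed_connect (T : finType) (e : rel T) (S : pred T) (x y : T) :
  (forall u v, S u -> e u v -> S v) -> S x -> connect e x y -> S y.
Proof.
move=> cl Sx /connectP[p pth ->].
elim: p x pth Sx => //= z p IH x /andP[exz pth] Sx.
exact: IH pth (cl _ _ Sx exz).
Qed.

Lemma isolated_connect (T : finType) (e : rel T) (x y : T) :
  (forall v, ~~ e x v) -> connect e x y -> y = x.
Proof.
move=> iso /connectP[[|z p] /= pth ->] //.
by case/andP: pth => exz; move: (iso z); rewrite exz.
Qed.

Lemma Pr_shift (F : finFieldType) (w K r i K' : F) : (4 <= #|F|)%N ->
  w ^+ 2 + w + 1 = 0 -> 2%:R != 0 :> F -> 3%:R != 0 :> F -> r != 0 ->
  connect (@CPadj F) (fKri K r i) (fKri K' r i).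
Proof.
move=> h4 hw h2 h3 r0.
have [->|KK] := eqVneq K K'; first exact: connect0.
have dl : K - K' != 0 by rewrite subr_eq0.
have [a aE] : exists a, a = 3%:R * r / (2%:R * (K - K')) by eexists.
have a0 : a != 0 by rewrite aE !mulf_neq0 ?invr_eq0 ?mulf_neq0.
have a20 : 2%:R * a != 0 by rewrite mulf_neq0.
apply: (connect_trans (y := fKri (K - r / a) r (i - a))).
  apply: connect1; apply: (Pr_adj h4 hw h3 r0).
    by rewrite -subr_eq0 opprB addrC subrK.
  have -> : i - (i - a) = a by ring.
  by field.
apply: (connect_trans (y := fKri (K - 2%:R * r / a) r (i - 2%:R * a))).
  apply: connect1; apply: (Pr_adj h4 hw h3 r0).
    rewrite -subr_eq0; have -> : i - a - (i - 2%:R * a) = a by ring.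
    exact: a0.
  have -> : i - a - (i - 2%:R * a) = a by ring.
  by field.
apply: connect1; apply: (Pr_adj h4 hw h3 r0).
  rewrite -subr_eq0; have -> : i - 2%:R * a - i = - (2%:R * a) by ring.
  by rewrite oppr_eq0.
have -> : i - 2%:R * a - i = - (2%:R * a) by ring.
rewrite aE; field.
by rewrite dl h2 h3 r0 oppr_eq0 mulf_neq0.
Qed.

Lemma Pr_connect (F : finFieldType) (w K r i K2 i2 : F) : (4 <= #|F|)%N ->
  w ^+ 2 + w + 1 = 0 -> 2%:R != 0 :> F -> 3%:R != 0 :> F -> r != 0 ->
  connect (@CPadj F) (fKri K r i) (fKri K2 r i2).
Proof.
move=> h4 hw h2 h3 r0.
have [<-|ii] := eqVneq i i2; first exact: (@Pr_shift F w K r i K2 h4 hw h2 h3 r0).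
apply: (connect_trans (y := fKri (K2 + r / (i - i2)) r i)).
  exact: (@Pr_shift F w K r i _ h4 hw h2 h3 r0).
apply: connect1; apply: (Pr_adj h4 hw h3 r0 ii); ring.
Qed.

Lemma CPcomp_Pr (F : finFieldType) (w K r i : F) : (4 <= #|F|)%N ->
  w ^+ 2 + w + 1 = 0 -> 2%:R != 0 :> F -> 3%:R != 0 :> F -> r != 0 ->
  CPcomp (fKri K r i) = Pr r.
Proof.
move=> h4 hw h2 h3 r0; apply/setP => g; rewrite inE; apply/idP/idP.
  apply: (closed_connect (S := fun u => u \in Pr r)).
    move=> u v /imset2P[K' i' _ _ ->]; exact: (@Pr_closed F K' r i' v h4 r0).
  by apply/imset2P; exists K i; rewrite ?inE.
case/imset2P => K' i' _ _ ->; exact: (@Pr_connect F w K r i K' i' h4 hw h2 h3 r0).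
Qed.

Lemma CPcomp_aff (F : finFieldType) (a b : F) : (4 <= #|F|)%N -> a != 0 ->
  CPcomp (mob a b 0 1) = [set mob a b 0 1].
Proof.
move=> h4 a0; apply/setP => g; rewrite !inE; apply/idP/idP.
  by move/(isolated_connect (fun v => @aff_isolated F a b v h4 a0)) => ->.
by move/eqP ->; exact: connect0.
Qed.

Local Close Scope ring_scope.

Theorem theorem14 (p m : nat) (F : finFieldType)
  (hp : prime p) (hodd : odd p) (hq : #|F| = p ^ m)
  (h3 : #|F| %% 3 = 1) (h13 : 13 <= #|F|) :
  [/\ [set f in PGL F | f None == None] = Aff F,
      #|Aff F| = (#|F| * (#|F| - 1))%N,
      #|[set Pr r | r in [set r : F | r != 0%R]]| = (#|F| - 1)%N &
      CPcomponents F =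
        [set [set f] | f in Aff F] :|: [set Pr r | r in [set r : F | r != 0%R]]].
Proof.
have h4 : (4 <= #|F|)%N by apply: leq_trans h13.
have [w hw] := cube_root h3.
have [c2 c3] := char_facts hp hodd hq h3.
have cnz : #|[set r : F | r != 0%R]| = (#|F| - 1)%N.
  have -> : [set r : F | r != 0%R] = [set~ 0%R] by apply/setP => r; rewrite !inE.
  by rewrite cardsC1 subn1.
split.
- apply/setP => f; rewrite inE; apply/andP/idP.
    case=> fP fN; case: (PGL_cases fP) => [[a [b [a0 ->]]]|[K [r [i [r0 e]]]]].
      by apply/imset2P; exists a b; rewrite ?inE.
    by move: fN; rewrite e ffunE.
  case/imset2P => a b; rewrite inE => a0 _ ->; split; first exact: aff_PGL.
  by rewrite ffunE /= eqxx.
- rewrite /Aff curry_imset2X card_imset; last first.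
    move=> [a b] [a' b'] /= /ffunP h.
    have h0 := h (Some 0%R); have h1 := h (Some 1%R); rewrite !ffunE /= in h0 h1.
    move: h0 h1; rewrite !mul0r !add0r oner_eq0 !divr1 !mulr0 !add0r !mulr1 => [[->]] [].
    by move/addIr => ->.
  by rewrite cardsX cardsT cnz mulnC.
- rewrite card_imset // => r r' e.
  have : fKri 0%R r 0%R \in Pr r' by rewrite -e; apply/imset2P; exists 0%R 0%R; rewrite ?inE.
  case/imset2P => a i _ _ /ffunP h.
  have h0 := h None; have h1 := h (Some 0%R); have h2 := h (Some 1%R).
  rewrite !ffunE /= in h0 h1 h2.
  case: h0 => a0; subst a.
  have i0 : i = 0%R by move: h1; rewrite eqxx; case: eqP.
  subst i; move: h2; rewrite oner_eq0 !subr0 !divr1 !add0r.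
  by case.
- apply/setP => C; rewrite !inE; apply/imsetP/orP.
    case=> v vP ->; case: (PGL_cases vP) => [[a [b [a0 ->]]]|[K [r [i [r0 ->]]]]].
      left; apply/imsetP; exists (mob a b 0%R 1%R); last exact: (@CPcomp_aff F a b h4 a0).
      by apply/imset2P; exists a b; rewrite ?inE.
    right; apply/imsetP; exists r; first by rewrite inE.
    exact: (@CPcomp_Pr F w K r i h4 hw c2 c3 r0).
  case=> [/imsetP[f fA ->]|/imsetP[r rnz ->]].
    case/imset2P: fA => a b; rewrite inE => a0 _ ->.
    exists (mob a b 0%R 1%R); first exact: aff_PGL.
    by rewrite (@CPcomp_aff F a b h4 a0).
  rewrite inE in rnz.
  exists (fKri 0%R r 0%R); first exact: fK_PGL.
  by rewrite (@CPcomp_Pr F w 0%R r 0%R h4 hw c2 c3 rnz).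
Qed.
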